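(* Let $q$ be a prime power and $k\ge3$, $h\ge2$ integers, and $1\le u_0<u_1\le\dots\le u_h$ integers. Let $U_0,U_1,\dots,U_h$ be subspaces of $\mathbf F_q^k$ of dimensions $u_0,u_1,\dots,u_h$ with $U_i\cap U_j=U_0$ for all distinct $i,j\in\{1,\dots,h\}$, and assume $q^k-q^{k-1}>q^{u_0}-1+\sum_{i=1}^h(q^{u_i}-q^{u_0})$. Let $U$ be the set of nonzero vectors of $\mathbf F_q^k$ not in $U_1\cup\dots\cup U_h$, let $\widetilde G$ be a matrix whose columns consist of exactly one representative of each class $\{\lambda\mathbf v:\lambda\in\mathbf F_q^*\}$, $\mathbf v\in U$, and let $\mathbf C$ be the linear code with generator matrix $\widetilde G$. If $h\le q^{u_1-u_0}$, then $\mathbf C$ is a linear $\big[\frac{(q^k-q^{u_0})-\sum_{i=1}^h(q^{u_i}-q^{u_0})}{q-1},\,k,\,q^{k-1}-\sum_{i=1}^hq^{u_i-1}\big]_q$ code (its minimum distance equals $q^{k-1}-\sum_{i=1}^hq^{u_i-1}$). *)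

(* Defs.v *)
From HB Require Import structures.
From mathcomp Require Import all_boot all_order all_algebra all_field.
Set Implicit Arguments. Unset Strict Implicit. Unset Printing Implicit Defensive.
Import GRing.Theory Num.Theory.
Local Open Scope ring_scope.

Definition hwt (F : fieldType) (n : nat) (c : 'rV[F]_n) : nat :=
  #|[set j : 'I_n | c 0 j != 0]|.

Definition codeword (F : fieldType) (k n : nat) (G : 'M[F]_(k, n)) (c : 'rV[F]_n) : Prop :=
  exists m : 'rV[F]_k, c = m *m G.

Definition is_min_distance (F : fieldType) (k n : nat) (G : 'M[F]_(k, n)) (d : int) : Prop :=
  (exists c, codeword G c /\ c != 0 /\ (hwt c)%:Z = d) /\
  (forall c, codeword G c -> c != 0 -> d <= (hwt c)%:Z).

(* Main.v *)
Require Import Defs.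
From HB Require Import structures.
From mathcomp Require Import all_boot all_order all_algebra all_field.
From mathcomp Require Import zify ring lra.
Set Implicit Arguments. Unset Strict Implicit. Unset Printing Implicit Defensive.
Import GRing.Theory Num.Theory.
Local Open Scope ring_scope.

Definition SV (F : finFieldType) k (V : {vspace 'rV[F]_k}) : {set 'rV[F]_k} :=
  [set v | v \in V].
Definition Hm (F : finFieldType) k (m : 'rV[F]_k) : {vspace 'rV[F]_k} :=
  lker (linfun (mulmxr m^T)).

Lemma mx11_eq0 (F : fieldType) (A : 'M[F]_1) : (A == 0) = (A 0 0 == 0).
Proof.
apply/eqP/eqP => [->|h]; first by rewrite mxE.
by apply/matrixP => i j; rewrite !ord1 h mxE.
Qed.

Lemma memHm (F : finFieldType) k (m v : 'rV[F]_k) :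
  (v \in Hm m) = ((v *m m^T) 0 0 == 0).
Proof. by rewrite memv_ker lfunE /= mx11_eq0. Qed.

Lemma card_SV (F : finFieldType) k (V : {vspace 'rV[F]_k}) :
  #|SV V| = (#|F| ^ \dim V)%N.
Proof. by rewrite cardsE card_vspace. Qed.

Lemma dim_full (F : finFieldType) k : \dim (fullv : {vspace 'rV[F]_k}) = k.
Proof. by rewrite dimvf; exact: mul1n. Qed.

Lemma dim_capH (F : finFieldType) k (V : {vspace 'rV[F]_k}) m :
  \dim (V :&: Hm m) = if (V <= Hm m)%VS then \dim V else (\dim V).-1.
Proof.
have := limg_ker_dim (linfun (mulmxr m^T)) V.
have le1 : (\dim (linfun (mulmxr m^T) @: V) <= 1)%N.
  by rewrite (leq_trans (dimvS (subvf _))) // dimvf.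
case: ifP => hV.
  by rewrite (capv_idPl hV).
rewrite /Hm; move: hV; rewrite lkerE -dimv_eq0 => hV.
have -> : \dim (linfun (mulmxr m^T) @: V) = 1%N.
  by apply/eqP; rewrite eqn_leq le1 lt0n hV.
by move=> <-; rewrite addn1.
Qed.

Lemma card_outH (F : finFieldType) k (V : {vspace 'rV[F]_k}) m :
  (#|SV V :&: ~: SV (Hm m)| + #|F| ^ \dim (V :&: Hm m) = #|F| ^ \dim V)%N.
Proof.
have e : SV (V :&: Hm m) = SV V :&: SV (Hm m).
  by apply/setP => v; rewrite !inE memv_cap.
rewrite -!card_SV e -(cardsID (SV (Hm m)) (SV V)) [in RHS]addnC -setDE.
by [].
Qed.

Lemma card_nz (F : finFieldType) k (V : {vspace 'rV[F]_k}) :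
  (#|SV V :&: ~: [set (0%R : 'rV[F]_k)]| + 1 = #|F| ^ \dim V)%N.
Proof.
have e : SV V :&: [set (0%R : 'rV[F]_k)] = [set 0].
  by apply/setP => v; rewrite !inE andb_idl // => /eqP ->; rewrite mem0v.
by rewrite -card_SV -(cardsID [set (0%R : 'rV[F]_k)] (SV V)) e cards1 setDE addnC.
Qed.

Lemma nz_row (F : fieldType) k (m : 'rV[F]_k) : m != 0 -> exists j, m 0 j != 0.
Proof.
move=> mn0; case: (pickP (fun j => m 0 j != 0)) => [j Hj | H]; first by exists j.
case/eqP: mn0; apply/rowP => j; move: (H j) => /negbFE/eqP ->; by rewrite mxE.
Qed.

Lemma notfull_Hm (F : finFieldType) k (m : 'rV[F]_k) : m != 0 ->
  ~~ (fullv <= Hm m)%VS.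
Proof.
case/nz_row => j hj; apply/negP => /subvP/(_ (delta_mx 0 j) (memvf _)).
by rewrite memHm -rowE !mxE (negbTE hj).
Qed.

Lemma dimHm (F : finFieldType) k (m : 'rV[F]_k) : m != 0 -> \dim (Hm m) = k.-1.
Proof.
move=> mn0; have := dim_capH fullv m; rewrite capfv (negbTE (notfull_Hm mn0)).
by rewrite dim_full.
Qed.

Lemma fiber (F : finFieldType) k n (c : 'I_n -> 'rV[F]_k) (S : {set 'rV[F]_k})
  (P : pred 'rV[F]_k) :
  (forall j, c j \in S) -> (0 \notin S) ->
  (forall a v, a != 0 -> v \in S -> a *: v \in S) ->
  (forall v, v \in S -> exists! j, exists a, v = a *: c j) ->
  (forall a v, a != 0 -> P (a *: v) = P v) ->
  #|S :&: [set v | P v]| = (#|[set j | P (c j)]| * #|F|.-1)%N.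
Proof.
move=> cS S0 SZ Suniq PZ.
have cn0 j : c j != 0 by apply: contraNneq S0 => <-.
pose D := setX [set j | P (c j)] [set~ (0 : F)].
pose f (x : 'I_n * F) := x.2 *: c x.1.
have -> : S :&: [set v | P v] = f @: D.
  apply/setP => v; rewrite !inE; apply/andP/imsetP.
    case=> vS Pv; case: (Suniq v vS) => j [[a ha] _].
    have an0 : a != 0 by apply: contraNneq S0 => a0; rewrite -(scale0r (c j)) -a0 -ha.
    exists (j, a); last by [].
    by rewrite !inE /= an0 andbT -(PZ a) // -ha.
  case=> [[j a]]; rewrite !inE /= => /andP [Pj an0] ->; split.
    exact: SZ.
  by rewrite PZ.
rewrite card_in_imset ?cardsX ?cardsC1 //.
move=> [j1 a1] [j2 a2]; rewrite !inE /= /f /= => /andP [_ a1n0] /andP [_ a2n0] e.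
have vS : a1 *: c j1 \in S by apply: SZ.
case: (Suniq _ vS) => j0 [_ hu].
have e1 : j0 = j1 by apply: hu; exists a1.
have e2 : j0 = j2 by apply: hu; exists a2.
subst j1 j2; congr (_, _).
apply/eqP; rewrite -subr_eq0; apply/eqP.
have : (a1 - a2) *: c j0 = 0 by rewrite scalerBl e subrr.
by move/eqP; rewrite scaler_eq0 (negbTE (cn0 j0)) orbF => /eqP.
Qed.

Lemma union_card (F : finFieldType) k (U : nat -> {vspace 'rV[F]_k})
  (X : {set 'rV[F]_k}) h :
  (forall i, (1 <= i <= h)%N -> (U 0%N <= U i)%VS) ->
  (forall i j, (1 <= i <= h)%N -> (1 <= j <= h)%N -> i != j ->
     (U i :&: U j)%VS = U 0%N) ->
  forall t, (t.+1 <= h)%N ->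
  (#|(\bigcup_(i < t.+1) SV (U i.+1)) :&: X| + t * #|SV (U 0%N) :&: X|
    = \sum_(i < t.+1) #|SV (U i.+1) :&: X|)%N.
Proof.
move=> sub0 cap0; elim=> [|t IH] ht.
  by rewrite big_ord1 big_ord1 mul0n addn0.
rewrite big_ord_recr /= [in RHS]big_ord_recr /= -IH ?(ltnW ht) //.
set A := \bigcup_(i < t.+1) SV (U i.+1).
have eAB : A :&: SV (U t.+2) = SV (U 0%N).
  apply/setP => v; rewrite !inE; apply/andP/idP.
    case=> /bigcupP [i _]; rewrite inE => vi vt.
    rewrite -(cap0 i.+1 t.+2) ?memv_cap ?vi ?vt //.
    - by rewrite ltnS (leq_trans _ ht) // ltnW // ltnS ltn_ord.
    - by rewrite eqSS neq_ltn ltn_ord.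
  move=> v0; split; last by apply: (subvP (sub0 _ _)) => //.
  apply/bigcupP; exists ord0 => //; rewrite inE.
  by apply: (subvP (sub0 _ _)) => //; rewrite (leq_trans _ ht).
have := cardsUI (A :&: X) (SV (U t.+2) :&: X).
rewrite -setIUl setIACA setIid eAB => e.
by rewrite mulSn addnA e addnAC.
Qed.

Lemma card_ann (F : finFieldType) k (W : {vspace 'rV[F]_k}) :
  #|[set m : 'rV[F]_k | (W <= Hm m)%VS]| = (#|F| ^ (k - \dim W))%N.
Proof.
set w := \dim W; pose b := vbasis W.
pose B : 'M[F]_(w, k) := \matrix_(t, j) (tnth b t) 0 j.
have rowB t : row t B = tnth b t by apply/rowP => j; rewrite !mxE.
have coefB m t : (m *m B^T) 0 t = (tnth b t *m m^T) 0 0.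
  by rewrite !mxE; apply: eq_bigr => j _; rewrite !mxE mulrC.
have memA m : (W <= Hm m)%VS = (m *m B^T == 0).
  rewrite -{1}(span_basis (vbasisP W)); apply/span_subvP/eqP.
    move=> h; apply/rowP => t; rewrite coefB [in RHS]mxE; apply/eqP.
    by rewrite -memHm; apply: h; rewrite mem_tnth.
  move=> h x /tnthP [t ->]; rewrite memHm -coefB h mxE.
  done.
have freeB : row_free B.
  rewrite -kermx_eq0; apply/eqP/row_matrixP => i; rewrite row0.
  set x := row i (kermx B).
  have : x *m B = 0 by rewrite -row_mul mulmx_ker row0.
  rewrite mulmx_sum_row => hx.
  have /freeP hfree := basis_free (vbasisP W).
  have := hfree (fun t => x 0 t).
  have e : \sum_(t < w) x 0 t *: (vbasis W)`_t = 0.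
    by rewrite -[RHS]hx; apply: eq_bigr => t _; rewrite rowB (tnth_nth 0).
  move=> /(_ e) h0; apply/rowP => t; rewrite h0 mxE //.
have fullB : row_full B^T by rewrite /row_full mxrank_tr.
case/row_fullP: fullB => X hX.
pose T := linfun (mulmxr B^T) : 'Hom('rV[F]_k, 'rV[F]_w).
have -> : [set m : 'rV[F]_k | (W <= Hm m)%VS] = SV (lker T).
  by apply/setP => m; rewrite !inE memA memv_ker lfunE.
rewrite card_SV; congr (_ ^ _)%N.
have := limg_ker_dim T fullv; rewrite capfv !dim_full.
have -> : (T @: fullv)%VS = fullv.
  apply/eqP; rewrite eqEsubv subvf /=; apply/subvP => y _.
  have -> : y = T (y *m X) by rewrite lfunE /= -mulmxA hX mulmx1.
  by rewrite memv_img ?memvf.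
rewrite dim_full => e; by apply/eqP; rewrite -(eqn_add2r w) e subnK // -e leq_addl.
Qed.

Lemma union_bound (T : finType) (A : nat -> {set T}) (x : T) :
  (forall i, x \in A i) -> forall t,
  (#|\bigcup_(i < t.+1) A i| + t <= \sum_(i < t.+1) #|A i|)%N.
Proof.
move=> xA; elim=> [|t IH]; first by rewrite !big_ord1 addn0.
rewrite big_ord_recr /= [in X in (_ <= X)%N]big_ord_recr /=.
set X := \bigcup_(i < t.+1) A i; set Y := A t.+1.
have hI : (1 <= #|X :&: Y|)%N.
  rewrite card_gt0; apply/set0Pn; exists x; rewrite inE xA andbT.
  by apply/bigcupP; exists ord0.
have := cardsUI X Y; move: IH hI.
move: #|X :|: Y| #|X :&: Y| #|X| #|Y| (\sum_(i < t.+1) #|A i|) => a b c d e.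
lia.
Qed.

Lemma exists_good (F : finFieldType) k (U : nat -> {vspace 'rV[F]_k}) h :
  (2 <= h)%N -> (\dim (U 0%N) < \dim (U 1%N))%N ->
  (forall i, (1 <= i <= h)%N -> \dim (U 1%N) <= \dim (U i))%N ->
  (h <= #|F| ^ (\dim (U 1%N) - \dim (U 0%N)))%N ->
  exists m, (U 0%N <= Hm m)%VS /\ forall i, (1 <= i <= h)%N -> ~~ (U i <= Hm m)%VS.
Proof.
move=> h2 u01 u1i hq.
set q := #|F|.
have q1 : (1 < q)%N by rewrite /q finNzRing_gt1.
pose A i := [set m : 'rV[F]_k | (U i <= Hm m)%VS].
have A0 i : 0 \in A i.
  rewrite inE; apply/subvP => v _; by rewrite memHm trmx0 mulmx0 mxE.
have ub := union_bound (A := fun i => A i.+1) (fun i => A0 i.+1) h.-1.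
rewrite prednK ?(leq_trans _ h2) // in ub.
have sumb : (\sum_(i < h) #|A i.+1| <= h * q ^ (k - \dim (U 1%N)))%N.
  apply: (@leq_trans (\sum_(i < h) q ^ (k - \dim (U 1%N)))%N).
    apply: leq_sum. move=> i _. rewrite card_ann leq_pexp2l ?(ltnW q1) //.
    by apply: leq_sub2l; apply: u1i; rewrite ltn_ord.
  by rewrite sum_nat_const card_ord.
have u1k : (\dim (U 1%N) <= k)%N.
  by apply: leq_trans (dimvS (subvf (U 1%N))) _; rewrite dim_full.
have hk : (h * q ^ (k - \dim (U 1%N)) <= q ^ (k - \dim (U 0%N)))%N.
  apply: (leq_trans (leq_mul hq (leqnn _))); rewrite -expnD leq_pexp2l ?(ltnW q1) //.
  lia.
have lt : (#|\bigcup_(i < h) A i.+1| < #|A 0%N|)%N.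
  rewrite card_ann; move: ub sumb hk h2.
  move: #|\bigcup_(i < h) A i.+1| (\sum_(i < h) #|A i.+1|) (q ^ (k - \dim (U 1%N)))%N
    (q ^ (k - \dim (U 0%N)))%N => a b c d; lia.
have : ~~ (A 0%N \subset \bigcup_(i < h) A i.+1).
  by apply: contraL lt => /subset_leq_card; rewrite leqNgt.
case/subsetPn => m; rewrite inE => m0 mU; exists m; split=> // i /andP [i1 ih].
have ilt : (i.-1 < h)%N by rewrite prednK.
apply: contra mU => mi; apply/bigcupP; exists (Ordinal ilt) => //.
by rewrite inE /= prednK.
Qed.

Lemma notinU (F : finFieldType) k h (U : nat -> {vspace 'rV[F]_k}) v :
  reflect (forall i, (1 <= i <= h)%N -> v \notin U i)
          (v \notin \bigcup_(i < h) SV (U i.+1)).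
Proof.
apply: (iffP idP).
  move=> hv i /andP [i1 ih]; apply: contra hv => vi; apply/bigcupP.
  have ilt : (i.-1 < h)%N by rewrite prednK.
  by exists (Ordinal ilt) => //; rewrite inE /= prednK.
move=> hv; apply/bigcupP => [[i _]]; rewrite inE; apply/negP; apply: hv.
by rewrite /= ltn_ord.
Qed.

Lemma fiberG (F : finFieldType) k n h (U : nat -> {vspace 'rV[F]_k})
  (G : 'M[F]_(k, n)) (P : pred 'rV[F]_k) :
  (forall j : 'I_n, (col j G)^T != 0 /\
     forall i, (1 <= i <= h)%N -> (col j G)^T \notin U i) ->
  (forall v : 'rV[F]_k, v != 0 -> (forall i, (1 <= i <= h)%N -> v \notin U i) ->
     exists! j : 'I_n, exists a : F, v = a *: (col j G)^T) ->
  (forall a v, a != 0 -> P (a *: v) = P v) ->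
  #|(~: [set (0%R : 'rV[F]_k)] :\: \bigcup_(i < h) SV (U i.+1)) :&: [set v | P v]|
    = (#|[set j | P (col j G)^T]| * #|F|.-1)%N.
Proof.
move=> hcol huniq PZ.
have memS v : (v \in ~: [set 0] :\: \bigcup_(i < h) SV (U i.+1)) =
    (v != 0) && (v \notin \bigcup_(i < h) SV (U i.+1)).
  by rewrite !inE andbC.
apply: fiber => //.
- move=> j; rewrite memS; case: (hcol j) => -> /= h2; exact/notinU.
- by rewrite memS eqxx.
- move=> a v an0; rewrite !memS => /andP [vn0 /notinU vU].
  rewrite scaler_eq0 negb_or an0 vn0 /=; apply/notinU => i hi.
  apply: contra (vU i hi) => avi.
  by rewrite -(scalerK an0 v) memvZ.
- by move=> v; rewrite memS => /andP [vn0 /notinU vU]; apply: huniq.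
Qed.

Lemma coord (F : fieldType) k n (G : 'M[F]_(k, n)) (m : 'rV[F]_k) j :
  (m *m G) 0 j = ((col j G)^T *m m^T) 0 0.
Proof. by rewrite !mxE; apply: eq_bigr => i _; rewrite !mxE mulrC. Qed.

Lemma card_rV (F : finFieldType) k : #|{: 'rV[F]_k}| = (#|F| ^ k)%N.
Proof. by rewrite card_mx mul1n. Qed.

Lemma weight_eq (F : finFieldType) k n h (U : nat -> {vspace 'rV[F]_k})
  (G : 'M[F]_(k, n)) (m : 'rV[F]_k) :
  (forall j : 'I_n, (col j G)^T != 0 /\
     forall i, (1 <= i <= h)%N -> (col j G)^T \notin U i) ->
  (forall v : 'rV[F]_k, v != 0 -> (forall i, (1 <= i <= h)%N -> v \notin U i) ->
     exists! j : 'I_n, exists a : F, v = a *: (col j G)^T) ->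
  m != 0 ->
  (hwt (m *m G) * #|F|.-1 + #|\bigcup_(i < h) SV (U i.+1) :&: ~: SV (Hm m)|
     + #|F| ^ k.-1 = #|F| ^ k)%N.
Proof.
move=> hcol huniq mn0.
set Uall := \bigcup_(i < h) SV (U i.+1).
pose P := fun v : 'rV[F]_k => (v *m m^T) 0 0 != 0.
have PZ a v : a != 0 -> P (a *: v) = P v.
  by move=> an0; rewrite /P -scalemxAl mxE mulf_eq0 negb_or an0.
have := fiberG hcol huniq PZ.
have -> : (~: [set (0%R : 'rV[F]_k)] :\: Uall) :&: [set v | P v] = ~: SV (Hm m) :\: Uall.
  apply/setP => v; rewrite !inE /P -memHm.
  have [->|vn0] := eqVneq v 0; last by rewrite andbT andbC.
  by rewrite mem0v /= !andbF.
have -> : #|[set j | P (col j G)^T]| = hwt (m *m G).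
  by rewrite /hwt; apply: eq_card => j; rewrite !inE /P -coord.
move=> e.
have := cardsID Uall (~: SV (Hm m)); rewrite e setIC => e2.
have := cardsC (SV (Hm m)); rewrite card_rV card_SV dimHm // => e3.
rewrite -e3 -e2; lia.
Qed.

Lemma expn_split (q d : nat) : (0 < q)%N -> (0 < d)%N ->
  (q ^ d = q.-1 * q ^ d.-1 + q ^ d.-1)%N.
Proof.
move=> q0 d0; rewrite -{1}(prednK d0) expnS -{1}(prednK q0) mulSn addnC.
done.
Qed.

Lemma out_le (F : finFieldType) k (V : {vspace 'rV[F]_k}) m : (0 < \dim V)%N ->
  (#|SV V :&: ~: SV (Hm m)| <= #|F|.-1 * #|F| ^ (\dim V).-1)%N.
Proof.
move=> d0; have q0 : (0 < #|F|)%N by apply: ltnW; apply: finNzRing_gt1.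
have := card_outH V m; rewrite dim_capH.
case: ifP => _; rewrite (expn_split q0 d0);
  move: (#|F| ^ (\dim V).-1)%N (#|F|.-1) #|SV V :&: ~: SV (Hm m)| => y p x; nia.
Qed.

Lemma out_eq (F : finFieldType) k (V : {vspace 'rV[F]_k}) m : (0 < \dim V)%N ->
  ~~ (V <= Hm m)%VS ->
  (#|SV V :&: ~: SV (Hm m)| = #|F|.-1 * #|F| ^ (\dim V).-1)%N.
Proof.
move=> d0 hV; have q0 : (0 < #|F|)%N by apply: ltnW; apply: finNzRing_gt1.
have := card_outH V m; rewrite dim_capH (negbTE hV) (expn_split q0 d0); lia.
Qed.

Lemma out_0 (F : finFieldType) k (V : {vspace 'rV[F]_k}) m :
  (V <= Hm m)%VS -> #|SV V :&: ~: SV (Hm m)| = 0%N.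
Proof. by move=> hV; have := card_outH V m; rewrite dim_capH hV; lia. Qed.

Lemma PoszSum (I : Type) (r : seq I) (P : pred I) (f : I -> nat) :
  Posz (\sum_(i <- r | P i) f i)%N = \sum_(i <- r | P i) Posz (f i).
Proof. exact: (big_morph Posz PoszD (erefl _)). Qed.

Lemma shift_sum (R : nmodType) h (f : nat -> R) :
  \sum_(1 <= i < h.+1) f i = \sum_(i < h) f i.+1.
Proof. by rewrite big_add1 /= big_mkord. Qed.

Lemma lower (F : finFieldType) k n h (U : nat -> {vspace 'rV[F]_k})
  (G : 'M[F]_(k, n)) (m : 'rV[F]_k) :
  (forall j : 'I_n, (col j G)^T != 0 /\
     forall i, (1 <= i <= h)%N -> (col j G)^T \notin U i) ->
  (forall v : 'rV[F]_k, v != 0 -> (forall i, (1 <= i <= h)%N -> v \notin U i) ->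
     exists! j : 'I_n, exists a : F, v = a *: (col j G)^T) ->
  (forall i, (1 <= i <= h)%N -> (0 < \dim (U i))%N) ->
  (forall i, (1 <= i <= h)%N -> (U 0%N <= U i)%VS) ->
  (forall i j, (1 <= i <= h)%N -> (1 <= j <= h)%N -> i != j ->
     (U i :&: U j)%VS = U 0%N) ->
  (0 < k)%N -> (0 < h)%N -> m != 0 ->
  (#|F| ^ k.-1 <= hwt (m *m G) + \sum_(i < h) #|F| ^ (\dim (U i.+1)).-1)%N.
Proof.
move=> hcol huniq dpos sub0 hcap k0 h0 mn0.
have q0 : (0 < #|F|)%N by apply: ltnW; apply: finNzRing_gt1.
have we := weight_eq hcol huniq mn0.
have uc := union_card (~: SV (Hm m)) sub0 hcap (t := h.-1).
rewrite prednK // in uc; have {}uc := uc (leqnn _).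
have sb : (\sum_(i < h) #|SV (U i.+1) :&: ~: SV (Hm m)| <=
           #|F|.-1 * \sum_(i < h) #|F| ^ (\dim (U i.+1)).-1)%N.
  rewrite big_distrr /=; apply: leq_sum => i _; apply: out_le; apply: dpos.
  by rewrite /= ltn_ord.
rewrite (expn_split q0 k0) in we.
have : (#|F|.-1 * #|F| ^ k.-1 <= #|F|.-1 * (hwt (m *m G) +
          \sum_(i < h) #|F| ^ (\dim (U i.+1)).-1))%N.
  move: we uc sb.
  move: (hwt (m *m G)) #|F|.-1 (#|F| ^ k.-1)%N (\sum_(i < h) #|F| ^ (\dim (U i.+1)).-1)%N
    (\sum_(i < h) #|SV (U i.+1) :&: ~: SV (Hm m)|)%N
    #|\bigcup_(i < h) SV (U i.+1) :&: ~: SV (Hm m)|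
    (h.-1 * #|SV (U 0%N) :&: ~: SV (Hm m)|)%N => w p Y S t a z.
  nia.
rewrite leq_pmul2l //; rewrite -ltnS prednK //; exact: finNzRing_gt1.
Qed.

Lemma achieve (F : finFieldType) k n h (U : nat -> {vspace 'rV[F]_k})
  (G : 'M[F]_(k, n)) (m : 'rV[F]_k) :
  (forall j : 'I_n, (col j G)^T != 0 /\
     forall i, (1 <= i <= h)%N -> (col j G)^T \notin U i) ->
  (forall v : 'rV[F]_k, v != 0 -> (forall i, (1 <= i <= h)%N -> v \notin U i) ->
     exists! j : 'I_n, exists a : F, v = a *: (col j G)^T) ->
  (forall i, (1 <= i <= h)%N -> (0 < \dim (U i))%N) ->
  (forall i, (1 <= i <= h)%N -> (U 0%N <= U i)%VS) ->
  (forall i j, (1 <= i <= h)%N -> (1 <= j <= h)%N -> i != j ->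
     (U i :&: U j)%VS = U 0%N) ->
  (0 < k)%N -> (0 < h)%N ->
  (U 0%N <= Hm m)%VS -> (forall i, (1 <= i <= h)%N -> ~~ (U i <= Hm m)%VS) ->
  (hwt (m *m G) + \sum_(i < h) #|F| ^ (\dim (U i.+1)).-1 = #|F| ^ k.-1)%N.
Proof.
move=> hcol huniq dpos sub0 hcap k0 h0 m0 mi.
have q0 : (0 < #|F|)%N by apply: ltnW; apply: finNzRing_gt1.
have mn0 : m != 0.
  apply: contraNneq (mi 1%N _) => [->|]; last by rewrite /= h0.
  by apply/subvP => v _; rewrite memHm trmx0 mulmx0 mxE.
have we := weight_eq hcol huniq mn0.
have uc := union_card (~: SV (Hm m)) sub0 hcap (t := h.-1).
rewrite prednK // in uc; have {}uc := uc (leqnn _).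
rewrite out_0 // muln0 addn0 in uc.
have sb : (\sum_(i < h) #|SV (U i.+1) :&: ~: SV (Hm m)| =
           #|F|.-1 * \sum_(i < h) #|F| ^ (\dim (U i.+1)).-1)%N.
  rewrite big_distrr /=; apply: eq_bigr => i _; apply: out_eq.
    by apply: dpos; rewrite /= ltn_ord.
  by apply: mi; rewrite /= ltn_ord.
rewrite (expn_split q0 k0) in we.
have : (#|F|.-1 * (hwt (m *m G) + \sum_(i < h) #|F| ^ (\dim (U i.+1)).-1) =
        #|F|.-1 * #|F| ^ k.-1)%N.
  move: we uc sb.
  move: (hwt (m *m G)) #|F|.-1 (#|F| ^ k.-1)%N (\sum_(i < h) #|F| ^ (\dim (U i.+1)).-1)%N
    (\sum_(i < h) #|SV (U i.+1) :&: ~: SV (Hm m)|)%N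
    #|\bigcup_(i < h) SV (U i.+1) :&: ~: SV (Hm m)| => w p Y S t a.
  nia.
move/eqP; rewrite eqn_pmul2l; first by move/eqP.
by rewrite -ltnS prednK //; exact: finNzRing_gt1.
Qed.
Unset Implicit Arguments.
Set Strict Implicit.

Theorem theorem3p2 (F : finFieldType) (q k h : nat)
  (u : nat -> nat) (U : nat -> {vspace 'rV[F]_k}) (n : nat) (G : 'M[F]_(k, n)) :
  #|F| = q ->
  (3 <= k)%N -> (2 <= h)%N ->
  (1 <= u 0%N)%N -> (u 0%N < u 1%N)%N ->
  (forall i, (1 <= i)%N -> (i < h)%N -> (u i <= u i.+1)%N) ->
  (forall i, (i <= h)%N -> \dim (U i) = u i) ->
  (forall i j, (1 <= i <= h)%N -> (1 <= j <= h)%N -> i != j ->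
     (U i :&: U j)%VS = U 0%N) ->
  ((q ^ k - q ^ k.-1)%N%:Z >
     (q ^ u 0%N)%:Z - 1 + \sum_(1 <= i < h.+1) ((q ^ u i)%:Z - (q ^ u 0%N)%:Z)) ->
  (* columns of G: each is a nonzero vector outside U_1 u ... u U_h *)
  (forall j : 'I_n, (col j G)^T != 0 /\
     forall i, (1 <= i <= h)%N -> (col j G)^T \notin U i) ->
  (* exactly one representative of each class F^* v, v in that set *)
  (forall v : 'rV[F]_k, v != 0 -> (forall i, (1 <= i <= h)%N -> v \notin U i) ->
     exists! j : 'I_n, exists a : F, v = a *: (col j G)^T) ->
  (h <= q ^ (u 1%N - u 0%N))%N ->
  (n%:R : rat) = ((q ^ k)%:R - (q ^ u 0%N)%:R
                  - \sum_(1 <= i < h.+1) ((q ^ u i)%:R - (q ^ u 0%N)%:R)) / (q.-1)%:R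
  /\ \rank G = k
  /\ is_min_distance G ((q ^ k.-1)%:Z - \sum_(1 <= i < h.+1) (q ^ (u i).-1)%:Z).
Proof.
move=> hq hk3 hh2 hu0 hu01 hmono hdim hcap hineq hcol huniq hhq.
subst q.
have q1 : (1 < #|F|)%N by apply: finNzRing_gt1.
have q0 : (0 < #|F|)%N by apply: ltnW.
have h0 : (0 < h)%N by apply: ltnW.
have k0 : (0 < k)%N by apply: leq_trans hk3.
have u1i : forall i, (1 <= i <= h)%N -> (u 1%N <= u i)%N.
  elim=> [//|i IH] /andP [_ hi]; case: i IH hi => [//|i] IH hi.
  apply: leq_trans (IH _) (hmono _ _ _) => //.
  by rewrite /= ltnW.
have dimU i : (1 <= i <= h)%N -> \dim (U i) = u i.
  by move=> /andP [_ hi]; apply: hdim.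
have upos i : (1 <= i <= h)%N -> (0 < u i)%N.
  move=> hi; apply: leq_trans hu0 _; apply: ltnW; apply: leq_trans hu01 (u1i _ hi).
have dpos i : (1 <= i <= h)%N -> (0 < \dim (U i))%N.
  by move=> hi; rewrite dimU // upos.
have sub0 i : (1 <= i <= h)%N -> (U 0%N <= U i)%VS.
  move=> hi; pose j := if i == 1%N then 2%N else 1%N.
  have hj : (1 <= j <= h)%N by rewrite /j; case: ifP.
  have ij : i != j by rewrite /j; case: ifP => [/eqP ->|/negbT].
  by rewrite -(hcap i j hi hj ij) capvSl.
have ilt (i : 'I_h) : (1 <= i.+1 <= h)%N by rewrite /= ltn_ord.
have Deq : (\sum_(i < h) #|F| ^ (\dim (U i.+1)).-1 = \sum_(i < h) #|F| ^ (u i.+1).-1)%N.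
  by apply: eq_bigr => i _; rewrite dimU.
set S' := (\sum_(i < h) #|F| ^ (u i.+1).-1)%N in Deq.
have lowr m : m != 0 -> (#|F| ^ k.-1 <= hwt (m *m G) + S')%N.
  by move=> mn0; rewrite -Deq; apply: lower.
have [m [m0 mi]] : exists m, (U 0%N <= Hm m)%VS /\
    forall i, (1 <= i <= h)%N -> ~~ (U i <= Hm m)%VS.
  apply: exists_good => //.
  - by rewrite !hdim.
  - by move=> i hi; rewrite !dimU // u1i.
  - by rewrite !hdim.
have ach : (hwt (m *m G) + S' = #|F| ^ k.-1)%N by rewrite -Deq; apply: achieve.
have Dlt : (S' < #|F| ^ k.-1)%N.
  rewrite shift_sum in hineq.
  have e1 : (#|F| ^ k - #|F| ^ k.-1 = #|F|.-1 * #|F| ^ k.-1)%N.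
    by rewrite (expn_split q0 k0) addnK.
  have e2 : (Posz (#|F|.-1 * S') <=
      \sum_(i < h) ((#|F| ^ u i.+1)%:Z - (#|F| ^ u 0%N)%:Z))%R.
    rewrite /S' big_distrr /= PoszSum; apply: ler_sum => i _.
    rewrite lerBrDr -PoszD lez_nat (expn_split q0 (upos _ (ilt i))) leq_add2l.
    rewrite leq_pexp2l // -ltnS prednK ?upos //.
    by apply: leq_trans hu01 (u1i _ (ilt i)).
  have e3 : (1 <= #|F| ^ u 0%N)%N by rewrite expn_gt0 q0.
  rewrite e1 in hineq.
  have : (#|F|.-1 * S' < #|F|.-1 * #|F| ^ k.-1)%N.
    rewrite -ltz_nat; move: hineq e2 e3.
    move: (\sum_(i < h) ((#|F| ^ u i.+1)%:Z - (#|F| ^ u 0%N)%:Z))%R => X.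
    move: (#|F| ^ u 0%N)%N (#|F|.-1 * S')%N (#|F|.-1 * #|F| ^ k.-1)%N => a b c.
    lia.
  by rewrite ltn_pmul2l // -ltnS prednK.
have hwt0 : hwt (0 : 'rV[F]_n) = 0%N.
  rewrite /hwt; apply/eqP; rewrite cards_eq0; apply/eqP/setP => j.
  by rewrite !inE mxE eqxx.
have dE : ((#|F| ^ k.-1)%:Z - \sum_(1 <= i < h.+1) (#|F| ^ (u i).-1)%:Z =
           Posz (#|F| ^ k.-1) - Posz S')%R.
  by rewrite shift_sum /S' PoszSum.
split; last split; last first.
- rewrite dE; split.
    exists (m *m G); split; first by exists m.
    split.
      apply/eqP => c0; move: ach; rewrite c0 hwt0 add0n => e.
      by move: Dlt; rewrite e ltnn.
    by rewrite -ach PoszD addrK.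
  move=> c [m' ->] cn0.
  have m'n0 : m' != 0 by apply: contraNneq cn0 => ->; rewrite mul0mx.
  by rewrite lerBlDr -PoszD lez_nat lowr.
- have : row_free G; last by move/eqP.
  rewrite -kermx_eq0; apply/eqP/row_matrixP => i; rewrite row0.
  set x := row i (kermx G).
  have xG : x *m G = 0 by rewrite -row_mul mulmx_ker row0.
  apply/eqP; apply: contraT => xn0.
  have := lowr x xn0; rewrite xG hwt0 add0n.
  by rewrite leqNgt Dlt.
set Uall := \bigcup_(i < h) SV (U i.+1).
set X := ~: [set (0%R : 'rV[F]_k)].
have hn := fiberG (P := predT) hcol huniq (fun _ _ _ => erefl).
have eT1 : [set v : 'rV[F]_k | predT v] = setT by apply/setP => v; rewrite !inE.
have eT2 : [set j : 'I_n | predT (col j G)^T] = setT by apply/setP => v; rewrite !inE.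
rewrite eT1 eT2 setIT cardsT card_ord in hn.
have e1 := cardsID Uall X.
rewrite hn in e1.
have e2 := cardsC [set (0%R : 'rV[F]_k)].
rewrite cards1 card_rV in e2.
have uc := union_card X sub0 hcap (t := h.-1).
rewrite prednK // in uc; have {}uc := uc (leqnn _).
have ez := card_nz (U 0%N); rewrite hdim // in ez.
have es : (\sum_(i < h) #|SV (U i.+1) :&: X| + h = \sum_(i < h) #|F| ^ u i.+1)%N.
  have -> : (\sum_(i < h) #|F| ^ u i.+1 = \sum_(i < h) (#|SV (U i.+1) :&: X| + 1))%N.
    by apply: eq_bigr => i _; rewrite card_nz dimU.
  by rewrite big_split /= sum_nat_const card_ord muln1.
set s := (\sum_(i < h) #|F| ^ u i.+1)%N in es.
have NI : (n * #|F|.-1 + #|F| ^ u 0%N + s = #|F| ^ k + h * #|F| ^ u 0%N)%N.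
  rewrite setIC in e1.
  move: e1 e2 uc ez es.
  move: (n * #|F|.-1)%N #|Uall :&: X| #|SV (U 0%N) :&: X| (#|F| ^ u 0%N)%N
    (\sum_(i < h) #|SV (U i.+1) :&: X|)%N (#|F| ^ k)%N #|X| => a b c d e f g.
  nia.
have qn0 : ((#|F|.-1)%:R : rat) != 0.
  by rewrite pnatr_eq0 -lt0n -ltnS prednK.
rewrite -[LHS](mulfK qn0); congr (_ / _).
rewrite shift_sum sumrB sumr_const card_ord -natr_sum -/s.
have := congr1 (fun x : nat => (x%:R : rat)) NI; rewrite /= !natrD !natrM.
move: (n%:R : rat) ((#|F|.-1)%:R : rat) (#|F| ^ u 0%N)%:R (s%:R : rat) (#|F| ^ k)%:R
  => a b c d e.
have ch : c *+ h = c * h%:R by rewrite mulr_natr.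
move: ch; move: (c *+ h) (h%:R : rat) => g f ch.
rewrite ch.
nra.
Qed.
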